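(* Let $f,g\in c_{0,0}(\mathbb{Z})$ and $\alpha>0$. Then $$W^\alpha(f*g)(n)=(W_+^\alpha f_+*g_-)(n)+W_+^\alpha(f_+*g_+)(n)+(f_-*W_+^\alpha g_+)(n),\qquad n\ge0,$$ $$W^\alpha(f*g)(n)=(W_-^\alpha f_-*g_+)(n)+W_-^\alpha(f_-*g_-)(n)+(f_+*W_-^\alpha g_-)(n),\qquad n<0.$$
   Context: $c_{0,0}(\mathbb{Z})$ is the space of finitely supported complex sequences on $\mathbb{Z}$, with convolution $(f*g)(n)=\sum_{j\in\mathbb{Z}}f(n-j)g(j)$. $f_+(n)=f(n)$ for $n\ge0$, $0$ for $n<0$; $f_-(n)=0$ for $n\ge0$, $f(n)$ for $n<0$. For $\gamma\in\mathbb{R}$, $k^\gamma(0)=1$, $k^\gamma(n)=\frac{\gamma(\gamma+1)\cdots(\gamma+n-1)}{n!}$ for $n\ge1$. $W_+f(n)=f(n)-f(n+1)$, $W_-f(n)=f(n)-f(n-1)$, $W_\pm^m$ their powers. For $\alpha>0$: $W_+^{-\alpha}f(n)=\sum_{j\ge n}k^\alpha(j-n)f(j)$, $W_-^{-\alpha}f(n)=\sum_{j\le n}k^\alpha(n-j)f(j)$, $W_\pm^\alpha f=W_\pm^mW_\pm^{-(m-\alpha)}f$ with $m=[\alpha]+1$. Finally $W^\alpha f(n)=W_+^\alpha f(n)$ for $n\ge0$ and $W^\alpha f(n)=W_-^\alpha f(n)$ for $n<0$. *)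

(* Defs.v *)
From Stdlib Require Import Reals ZArith List ClassicalEpsilon.
Open Scope R_scope.

Definition Cplx := (R * R)%type.
Definition C0 : Cplx := (0, 0).
Definition RtoC (r : R) : Cplx := (r, 0).
Definition Cadd (a b : Cplx) : Cplx := (fst a + fst b, snd a + snd b).
Definition Copp (a : Cplx) : Cplx := (- fst a, - snd a).
Definition Csub (a b : Cplx) : Cplx := Cadd a (Copp b).
Definition Cmul (a b : Cplx) : Cplx :=
  (fst a * fst b - snd a * snd b, fst a * snd b + snd a * fst b).

Definition finsupp (h : Z -> Cplx) : Prop :=
  exists N : nat, forall n : Z, (Z.of_nat N < Z.abs n)%Z -> h n = C0.

Definition sumZN (h : Z -> Cplx) (N : nat) : Cplx :=
  fold_right Cadd C0
    (map (fun i : nat => h (Z.of_nat i - Z.of_nat N)%Z) (seq 0 (2 * N + 1))).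

(* sum over Z of a finitely supported family (the value does not depend on
   the chosen support bound); defaults to 0 if h is not finitely supported,
   which never happens in the statement. *)
Definition sumZ (h : Z -> Cplx) : Cplx :=
  match excluded_middle_informative (finsupp h) with
  | left H => sumZN h (proj1_sig (constructive_indefinite_description _ H))
  | right _ => C0
  end.

Definition conv (f g : Z -> Cplx) (n : Z) : Cplx :=
  sumZ (fun j => Cmul (f (n - j)%Z) (g j)).

Definition fplus (f : Z -> Cplx) (n : Z) : Cplx := if (0 <=? n)%Z then f n else C0.
Definition fminus (f : Z -> Cplx) (n : Z) : Cplx := if (0 <=? n)%Z then C0 else f n.

Fixpoint risefact (g : R) (n : nat) : R :=
  match n with
  | O => 1
  | S m => risefact g m * (g + INR m)
  end.
Definition kgam (g : R) (n : nat) : R := risefact g n / INR (fact n).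

Definition Wp1 (f : Z -> Cplx) (n : Z) : Cplx := Csub (f n) (f (n + 1)%Z).
Definition Wm1 (f : Z -> Cplx) (n : Z) : Cplx := Csub (f n) (f (n - 1)%Z).

Definition Wp_neg (a : R) (f : Z -> Cplx) (n : Z) : Cplx :=
  sumZ (fun j => if (n <=? j)%Z
                 then Cmul (RtoC (kgam a (Z.to_nat (j - n)))) (f j) else C0).
Definition Wm_neg (a : R) (f : Z -> Cplx) (n : Z) : Cplx :=
  sumZ (fun j => if (j <=? n)%Z
                 then Cmul (RtoC (kgam a (Z.to_nat (n - j)))) (f j) else C0).

Definition mfl (a : R) : nat := S (Z.to_nat (Int_part a)).

Definition Wp (a : R) (f : Z -> Cplx) : Z -> Cplx :=
  Nat.iter (mfl a) Wp1 (Wp_neg (INR (mfl a) - a) f).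
Definition Wm (a : R) (f : Z -> Cplx) : Z -> Cplx :=
  Nat.iter (mfl a) Wm1 (Wm_neg (INR (mfl a) - a) f).

Definition W (a : R) (f : Z -> Cplx) (n : Z) : Cplx :=
  if (0 <=? n)%Z then Wp a f n else Wm a f n.

(* Main.v *)
Require Import Defs.
From Stdlib Require Import Reals ZArith Lia List FunctionalExtensionality ClassicalEpsilon.
Open Scope R_scope.

Ltac cunf := unfold Csub, Cadd, Cmul, Copp, C0, RtoC in *; simpl.

Lemma Cadd_comm (x y : Cplx) : Cadd x y = Cadd y x.
Proof. destruct x, y; cunf; f_equal; ring. Qed.
Lemma Cadd_assoc (x y z : Cplx) : Cadd (Cadd x y) z = Cadd x (Cadd y z).
Proof. destruct x, y, z; cunf; f_equal; ring. Qed.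
Lemma Cadd_0_l x : Cadd C0 x = x. Proof. destruct x; cunf; f_equal; ring. Qed.
Lemma Cadd_0_r x : Cadd x C0 = x. Proof. destruct x; cunf; f_equal; ring. Qed.
Lemma Cmul_0_l x : Cmul C0 x = C0. Proof. destruct x; cunf; f_equal; ring. Qed.
Lemma Cmul_0_r x : Cmul x C0 = C0. Proof. destruct x; cunf; f_equal; ring. Qed.
Lemma Cmul_comm x y : Cmul x y = Cmul y x. Proof. destruct x, y; cunf; f_equal; ring. Qed.
Lemma Cmul_assoc x y z : Cmul (Cmul x y) z = Cmul x (Cmul y z).
Proof. destruct x, y, z; cunf; f_equal; ring. Qed.
Lemma Cmul_add_r x y z : Cmul x (Cadd y z) = Cadd (Cmul x y) (Cmul x z).
Proof. destruct x, y, z; cunf; f_equal; ring. Qed.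
Lemma Cmul_add_l x y z : Cmul (Cadd x y) z = Cadd (Cmul x z) (Cmul y z).
Proof. destruct x, y, z; cunf; f_equal; ring. Qed.
Lemma Cmul_sub_l x y z : Cmul (Csub x y) z = Csub (Cmul x z) (Cmul y z).
Proof. destruct x, y, z; cunf; f_equal; ring. Qed.
Lemma Cmul_sub_r x y z : Cmul z (Csub x y) = Csub (Cmul z x) (Cmul z y).
Proof. destruct x, y, z; cunf; f_equal; ring. Qed.
Lemma Csub_add4 a b c d : Csub (Cadd a b) (Cadd c d) = Cadd (Csub a c) (Csub b d).
Proof. destruct a, b, c, d; cunf; f_equal; ring. Qed.
Lemma Csub_00 : Csub C0 C0 = C0. Proof. cunf; f_equal; ring. Qed.
Lemma Cadd_00 : Cadd C0 C0 = C0. Proof. cunf; f_equal; ring. Qed.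
Lemma Cmul_expand4 a b c d : Cmul (Cadd a b) (Cadd c d) =
  Cadd (Cadd (Cmul a d) (Cmul a c)) (Cadd (Cmul b c) (Cmul b d)).
Proof. destruct a, b, c, d; cunf; f_equal; ring. Qed.

Open Scope Z_scope.

Fixpoint sumI (h : Z -> Cplx) (a : Z) (l : nat) : Cplx :=
  match l with O => C0 | S l' => Cadd (h a) (sumI h (a+1) l') end.

Lemma fold_sumI h c l : forall s : nat,
  fold_right Cadd C0 (map (fun i : nat => h (Z.of_nat i - c)) (seq s l)) = sumI h (Z.of_nat s - c) l.
Proof.
  induction l as [|l IH]; intros s; simpl; auto.
  rewrite IH. f_equal. f_equal. lia.
Qed.

Lemma sumZN_sumI h N : sumZN h N = sumI h (- Z.of_nat N) (2*N+1)%nat.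
Proof. unfold sumZN. rewrite fold_sumI. f_equal. Qed.

Lemma sumI_zero h a l : (forall j, a <= j < a + Z.of_nat l -> h j = C0) -> sumI h a l = C0.
Proof.
  revert a; induction l as [|l IH]; intros a H; simpl; auto.
  rewrite H by lia. rewrite IH. apply Cadd_00. intros j Hj; apply H; lia.
Qed.

Lemma sumI_app h a l1 l2 : sumI h a (l1 + l2) = Cadd (sumI h a l1) (sumI h (a + Z.of_nat l1) l2).
Proof.
  revert a; induction l1 as [|l1 IH]; intros a; simpl.
  - rewrite Cadd_0_l. f_equal. lia.
  - rewrite IH, Cadd_assoc. f_equal. f_equal. f_equal. lia.
Qed.

Lemma sumI_add h1 h2 a l : sumI (fun j => Cadd (h1 j) (h2 j)) a l = Cadd (sumI h1 a l) (sumI h2 a l).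
Proof.
  revert a; induction l as [|l IH]; intros a; simpl. symmetry; apply Cadd_00.
  rewrite IH. destruct (h1 a), (h2 a), (sumI h1 (a+1) l), (sumI h2 (a+1) l); cunf; f_equal; ring.
Qed.

Lemma sumI_sub h1 h2 a l : sumI (fun j => Csub (h1 j) (h2 j)) a l = Csub (sumI h1 a l) (sumI h2 a l).
Proof.
  revert a; induction l as [|l IH]; intros a; simpl. symmetry; apply Csub_00.
  rewrite IH. destruct (h1 a), (h2 a), (sumI h1 (a+1) l), (sumI h2 (a+1) l); cunf; f_equal; ring.
Qed.

Lemma sumI_scal_l c h a l : sumI (fun j => Cmul c (h j)) a l = Cmul c (sumI h a l).
Proof.
  revert a; induction l as [|l IH]; intros a; simpl. symmetry; apply Cmul_0_r.
  rewrite IH, Cmul_add_r. reflexivity.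
Qed.

Lemma sumI_scal_r c h a l : sumI (fun j => Cmul (h j) c) a l = Cmul (sumI h a l) c.
Proof.
  revert a; induction l as [|l IH]; intros a; simpl. symmetry; apply Cmul_0_l.
  rewrite IH, Cmul_add_l. reflexivity.
Qed.

Lemma sumI_shift h a l k : sumI h a l = sumI (fun j => h (j + k)) (a - k) l.
Proof.
  revert a; induction l as [|l IH]; intros a; simpl; auto.
  rewrite (IH (a+1)). f_equal; f_equal; lia.
Qed.

Lemma sumI_last h a l : sumI h a (S l) = Cadd (sumI h a l) (h (a + Z.of_nat l)).
Proof.
  replace (S l) with (l + 1)%nat by lia. rewrite sumI_app. simpl. rewrite Cadd_0_r. reflexivity.
Qed.

Lemma sumI_rev h c a l : sumI h a l = sumI (fun j => h (c - j)) (c - (a + Z.of_nat l) + 1) l.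
Proof.
  revert a; induction l as [|l IH]; intros a; [reflexivity|].
  rewrite (sumI_last (fun j => h (c - j))). change (sumI h a (S l)) with (Cadd (h a) (sumI h (a+1) l)). rewrite (IH (a+1)).
  rewrite (Cadd_comm (h a)). f_equal. f_equal. lia. f_equal. lia.
Qed.

Lemma sumI_exchange (F : Z -> Z -> Cplx) a l b m :
  sumI (fun i => sumI (fun j => F i j) b m) a l = sumI (fun j => sumI (fun i => F i j) a l) b m.
Proof.
  revert a; induction l as [|l IH]; intros a; simpl.
  - symmetry. apply sumI_zero. auto.
  - rewrite IH. rewrite <- sumI_add. reflexivity.
Qed.
Definition supp (h : Z -> Cplx) (a : Z) (l : nat) : Prop :=
  forall j, (j < a \/ a + Z.of_nat l <= j) -> h j = C0.

Lemma sumI_widen h a l c L : supp h a l -> c <= a -> a + Z.of_nat l <= c + Z.of_nat L ->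
  sumI h c L = sumI h a l.
Proof.
  intros Hs H1 H2.
  destruct (Z_of_nat_complete (a - c)) as [l1 Hl1]; [lia|].
  assert (E : exists l3, L = (l1 + (l + l3))%nat) by (exists (L - l1 - l)%nat; lia).
  destruct E as [l3 E]. subst L.
  rewrite !sumI_app.
  rewrite (sumI_zero h c l1), (sumI_zero h (c + Z.of_nat l1 + Z.of_nat l) l3).
  - rewrite Cadd_0_l, Cadd_0_r. f_equal. lia.
  - intros j Hj. apply Hs. lia.
  - intros j Hj. apply Hs. lia.
Qed.

Lemma supp_finsupp h a l : supp h a l -> finsupp h.
Proof. intros H. exists (Z.to_nat (Z.abs a) + l)%nat. intros n Hn. apply H. lia. Qed.

Lemma finsupp_supp h : finsupp h -> exists a l, supp h a l.
Proof. intros [N HN]. exists (- Z.of_nat N), (2*N+1)%nat. intros j Hj. apply HN. lia. Qed.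

Lemma supp_mono h a l c L : supp h a l -> c <= a -> a + Z.of_nat l <= c + Z.of_nat L -> supp h c L.
Proof. intros H H1 H2 j Hj. apply H. lia. Qed.

Lemma supp_common a1 l1 a2 l2 : exists c L, c <= a1 /\ c <= a2 /\
  a1 + Z.of_nat l1 <= c + Z.of_nat L /\ a2 + Z.of_nat l2 <= c + Z.of_nat L.
Proof.
  exists (Z.min a1 a2), (Z.to_nat (Z.max (a1 + Z.of_nat l1) (a2 + Z.of_nat l2) - Z.min a1 a2)). lia.
Qed.

Lemma sumZ_supp h a l : supp h a l -> sumZ h = sumI h a l.
Proof.
  intros Hs. unfold sumZ.
  destruct (excluded_middle_informative (finsupp h)) as [H|H].
  2: { exfalso. apply H. eapply supp_finsupp; eauto. }
  destruct (constructive_indefinite_description _ H) as [N HN]. cbn [proj1_sig].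
  rewrite sumZN_sumI.
  assert (Hs2 : supp h (- Z.of_nat N) (2*N+1)%nat) by (intros j Hj; apply HN; lia).
  destruct (supp_common a l (- Z.of_nat N) (2*N+1)%nat) as (c & L & H1 & H2 & H3 & H4).
  rewrite <- (sumI_widen h _ _ c L Hs2), <- (sumI_widen h a l c L Hs); auto.
Qed.

Lemma sumZ_ext h1 h2 : (forall j, h1 j = h2 j) -> sumZ h1 = sumZ h2.
Proof. intros H. f_equal. apply functional_extensionality; auto. Qed.

Lemma sumZ_zero h : (forall j, h j = C0) -> sumZ h = C0.
Proof. intros H. rewrite (sumZ_supp h 0 0). reflexivity. intros j _; auto. Qed.

Lemma supp_add h1 h2 a l : supp h1 a l -> supp h2 a l -> supp (fun j => Cadd (h1 j) (h2 j)) a l.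
Proof. intros H1 H2 j Hj. rewrite (H1 j Hj), (H2 j Hj). apply Cadd_00. Qed.

Lemma supp_sub h1 h2 a l : supp h1 a l -> supp h2 a l -> supp (fun j => Csub (h1 j) (h2 j)) a l.
Proof. intros H1 H2 j Hj. rewrite (H1 j Hj), (H2 j Hj). apply Csub_00. Qed.

Lemma supp_mul_r u b a l : supp b a l -> supp (fun j => Cmul (u j) (b j)) a l.
Proof. intros H j Hj. rewrite (H j Hj). apply Cmul_0_r. Qed.

Lemma supp_mul_l u b a l : supp b a l -> supp (fun j => Cmul (b j) (u j)) a l.
Proof. intros H j Hj. rewrite (H j Hj). apply Cmul_0_l. Qed.

Lemma finsupp_add h1 h2 : finsupp h1 -> finsupp h2 -> finsupp (fun j => Cadd (h1 j) (h2 j)).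
Proof.
  intros F1 F2. destruct (finsupp_supp _ F1) as (a1 & l1 & H1).
  destruct (finsupp_supp _ F2) as (a2 & l2 & H2).
  destruct (supp_common a1 l1 a2 l2) as (c & L & ? & ? & ? & ?).
  apply (supp_finsupp _ c L). apply supp_add; eapply supp_mono; eauto.
Qed.

Lemma sumZ_add_supp h1 h2 a l : supp h1 a l -> supp h2 a l ->
  sumZ (fun j => Cadd (h1 j) (h2 j)) = Cadd (sumZ h1) (sumZ h2).
Proof.
  intros H1 H2. rewrite (sumZ_supp _ a l (supp_add _ _ _ _ H1 H2)),
    (sumZ_supp _ a l H1), (sumZ_supp _ a l H2). apply sumI_add.
Qed.

Lemma sumZ_add h1 h2 : finsupp h1 -> finsupp h2 ->
  sumZ (fun j => Cadd (h1 j) (h2 j)) = Cadd (sumZ h1) (sumZ h2).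
Proof.
  intros F1 F2. destruct (finsupp_supp _ F1) as (a1 & l1 & H1).
  destruct (finsupp_supp _ F2) as (a2 & l2 & H2).
  destruct (supp_common a1 l1 a2 l2) as (c & L & ? & ? & ? & ?).
  apply (sumZ_add_supp _ _ c L); eapply supp_mono; eauto.
Qed.

Lemma sumZ_sub h1 h2 : finsupp h1 -> finsupp h2 ->
  sumZ (fun j => Csub (h1 j) (h2 j)) = Csub (sumZ h1) (sumZ h2).
Proof.
  intros F1 F2. destruct (finsupp_supp _ F1) as (a1 & l1 & H1).
  destruct (finsupp_supp _ F2) as (a2 & l2 & H2).
  destruct (supp_common a1 l1 a2 l2) as (c & L & ? & ? & ? & ?).
  assert (S1 : supp h1 c L) by (eapply supp_mono; eauto).
  assert (S2 : supp h2 c L) by (eapply supp_mono; eauto).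
  rewrite (sumZ_supp _ c L (supp_sub _ _ _ _ S1 S2)),
    (sumZ_supp _ c L S1), (sumZ_supp _ c L S2). apply sumI_sub.
Qed.

Lemma sumZ_scal_l c h : finsupp h -> sumZ (fun j => Cmul c (h j)) = Cmul c (sumZ h).
Proof.
  intros F. destruct (finsupp_supp _ F) as (a & l & H).
  rewrite (sumZ_supp h a l H), (sumZ_supp _ a l). apply sumI_scal_l.
  apply supp_mul_r; auto.
Qed.

Lemma sumZ_scal_r c h : finsupp h -> sumZ (fun j => Cmul (h j) c) = Cmul (sumZ h) c.
Proof.
  intros F. destruct (finsupp_supp _ F) as (a & l & H).
  rewrite (sumZ_supp h a l H), (sumZ_supp _ a l). apply sumI_scal_r.
  apply supp_mul_l; auto.
Qed.

Lemma sumZ_shift k h : finsupp h -> sumZ (fun j => h (j + k)) = sumZ h.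
Proof.
  intros F. destruct (finsupp_supp _ F) as (a & l & H).
  rewrite (sumZ_supp h a l H), (sumZ_supp _ (a - k) l).
  symmetry; apply sumI_shift.
  intros j Hj. apply H. lia.
Qed.

Lemma sumZ_rev c h : finsupp h -> sumZ (fun j => h (c - j)) = sumZ h.
Proof.
  intros F. destruct (finsupp_supp _ F) as (a & l & H).
  rewrite (sumZ_supp h a l H), (sumZ_supp _ (c - (a + Z.of_nat l) + 1) l).
  symmetry; apply sumI_rev.
  intros j Hj. apply H. lia.
Qed.

Lemma sumZ_fubini (F : Z -> Z -> Cplx) a1 l1 a2 l2 :
  (forall i j, (i < a1 \/ a1 + Z.of_nat l1 <= i \/ j < a2 \/ a2 + Z.of_nat l2 <= j) -> F i j = C0) ->
  sumZ (fun i => sumZ (fun j => F i j)) = sumZ (fun j => sumZ (fun i => F i j)).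
Proof.
  intros H.
  rewrite (sumZ_ext _ (fun i => sumI (fun j => F i j) a2 l2)).
  2: { intros i. apply sumZ_supp. intros j Hj. apply H. lia. }
  rewrite (sumZ_ext (fun j => sumZ (fun i => F i j)) (fun j => sumI (fun i => F i j) a1 l1)).
  2: { intros j. apply sumZ_supp. intros i Hi. apply H. lia. }
  rewrite (sumZ_supp (fun i => sumI (fun j => F i j) a2 l2) a1 l1),
          (sumZ_supp (fun j => sumI (fun i => F i j) a1 l1) a2 l2).
  - apply sumI_exchange.
  - intros j Hj. apply sumI_zero. intros i _. apply H. lia.
  - intros i Hi. apply sumI_zero. intros j _. apply H. lia.
Qed.
Lemma conv_supp a b aa la ba lb : supp a aa la -> supp b ba lb -> supp (conv a b) (aa + ba) (la + lb).
Proof.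
  intros Ha Hb n Hn. unfold conv. apply sumZ_zero. intros j.
  destruct (Z_lt_le_dec j ba) as [Hj|Hj].
  { rewrite (Hb j (or_introl Hj)). apply Cmul_0_r. }
  destruct (Z_lt_le_dec j (ba + Z.of_nat lb)) as [Hj2|Hj2].
  - rewrite (Ha (n - j)). apply Cmul_0_l. lia.
  - rewrite (Hb j (or_intror Hj2)). apply Cmul_0_r.
Qed.

Lemma finsupp_conv a b : finsupp a -> finsupp b -> finsupp (conv a b).
Proof.
  intros Fa Fb. destruct (finsupp_supp _ Fa) as (aa & la & Ha).
  destruct (finsupp_supp _ Fb) as (ba & lb & Hb).
  eapply supp_finsupp. apply conv_supp; eauto.
Qed.

Lemma conv_comm u a n : finsupp a -> conv u a n = conv a u n.
Proof.
  intros F. unfold conv.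
  destruct (finsupp_supp _ F) as (aa & la & H).
  assert (Fs : finsupp (fun j => Cmul (u (n - j)) (a j))).
  { eapply supp_finsupp. apply (supp_mul_r (fun j => u (n - j))). eauto. }
  rewrite <- (sumZ_rev n _ Fs). apply sumZ_ext. intros j. cbv beta.
  replace (n - (n - j)) with j by lia. apply Cmul_comm.
Qed.

Definition TK (G h : Z -> Cplx) (n : Z) : Cplx := sumZ (fun j => Cmul (G (j - n)) (h j)).

Lemma TK_conv G a b n : finsupp a -> finsupp b -> TK G (conv a b) n = conv (TK G a) b n.
Proof.
  intros Fa Fb.
  destruct (finsupp_supp _ Fa) as (aa & la & Ha).
  destruct (finsupp_supp _ Fb) as (ba & lb & Hb).
  unfold TK, conv.
  rewrite (sumZ_ext (fun j => Cmul (G (j - n)) (sumZ (fun i => Cmul (a (j - i)) (b i))))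
             (fun j => sumZ (fun i => Cmul (G (j - n)) (Cmul (a (j - i)) (b i))))).
  2: { intros j. symmetry. apply sumZ_scal_l. eapply supp_finsupp.
       apply (supp_mul_r (fun i => a (j - i))). eauto. }
  rewrite (sumZ_ext (fun i => Cmul (sumZ (fun j => Cmul (G (j - (n - i))) (a j))) (b i))
             (fun i => sumZ (fun j => Cmul (G (j - n)) (Cmul (a (j - i)) (b i))))).
  2: { intros i. rewrite <- sumZ_scal_r.
       2: { eapply supp_finsupp. apply (supp_mul_r (fun j => G (j - (n - i)))). eauto. }
       rewrite <- (sumZ_shift (- i)).
       2: { eapply supp_finsupp. apply (supp_mul_l (fun _ => b i)).
            apply (supp_mul_r (fun j => G (j - (n - i)))). eauto. }
       apply sumZ_ext. intros j. cbv beta.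
       replace (j + - i - (n - i)) with (j - n) by lia.
       replace (j + - i) with (j - i) by lia. apply Cmul_assoc. }
  apply (sumZ_fubini (fun j i => Cmul (G (j - n)) (Cmul (a (j - i)) (b i)))
           (aa + ba) (la + lb) ba lb).
  intros j i Hji.
  destruct (Z_lt_le_dec i ba) as [Hi|Hi].
  { rewrite (Hb i (or_introl Hi)), Cmul_0_r. apply Cmul_0_r. }
  destruct (Z_lt_le_dec i (ba + Z.of_nat lb)) as [Hi2|Hi2].
  - rewrite (Ha (j - i)), Cmul_0_l. apply Cmul_0_r. lia.
  - rewrite (Hb i (or_intror Hi2)), Cmul_0_r. apply Cmul_0_r.
Qed.

Lemma TK_add G h1 h2 n : finsupp h1 -> finsupp h2 ->
  TK G (fun m => Cadd (h1 m) (h2 m)) n = Cadd (TK G h1 n) (TK G h2 n).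
Proof.
  intros F1 F2. unfold TK.
  rewrite (sumZ_ext _ (fun j => Cadd (Cmul (G (j - n)) (h1 j)) (Cmul (G (j - n)) (h2 j)))).
  2: { intros j. apply Cmul_add_r. }
  apply sumZ_add.
  - destruct (finsupp_supp _ F1) as (a & l & H). eapply supp_finsupp.
    apply (supp_mul_r (fun j => G (j - n))). eauto.
  - destruct (finsupp_supp _ F2) as (a & l & H). eapply supp_finsupp.
    apply (supp_mul_r (fun j => G (j - n))). eauto.
Qed.

Definition D (s : Z) (h : Z -> Cplx) (n : Z) : Cplx := Csub (h n) (h (n + s)).

Lemma D_conv s u b n : finsupp b -> D s (conv u b) n = conv (D s u) b n.
Proof.
  intros Fb. destruct (finsupp_supp _ Fb) as (ba & lb & Hb).
  unfold D, conv.
  rewrite <- sumZ_sub.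
  - apply sumZ_ext. intros j. rewrite Cmul_sub_l.
    replace (n - j + s) with (n + s - j) by lia. reflexivity.
  - eapply supp_finsupp. apply (supp_mul_r (fun j => u (n - j))). eauto.
  - eapply supp_finsupp. apply (supp_mul_r (fun j => u (n + s - j))). eauto.
Qed.

Lemma iterD_conv m s u b : finsupp b ->
  Nat.iter m (D s) (conv u b) = conv (Nat.iter m (D s) u) b.
Proof.
  intros Fb. induction m as [|m IH]; simpl; auto.
  rewrite IH. apply functional_extensionality. intros n. apply D_conv; auto.
Qed.

Lemma iterD_add m s h1 h2 :
  Nat.iter m (D s) (fun n => Cadd (h1 n) (h2 n)) =
  (fun n => Cadd (Nat.iter m (D s) h1 n) (Nat.iter m (D s) h2 n)).
Proof.
  induction m as [|m IH]; simpl; auto.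
  rewrite IH. apply functional_extensionality. intros n. unfold D. apply Csub_add4.
Qed.

Definition P m s G h := Nat.iter m (D s) (TK G h).

Lemma P_conv_l m s G a b : finsupp a -> finsupp b -> P m s G (conv a b) = conv (P m s G a) b.
Proof.
  intros Fa Fb. unfold P.
  rewrite (functional_extensionality (TK G (conv a b)) (conv (TK G a) b))
    by (intros; apply TK_conv; auto).
  apply iterD_conv; auto.
Qed.

Lemma P_conv_r m s G a b n : finsupp a -> finsupp b -> P m s G (conv a b) n = conv a (P m s G b) n.
Proof.
  intros Fa Fb.
  replace (conv a b) with (conv b a)
    by (apply functional_extensionality; intros; apply conv_comm; auto).
  rewrite P_conv_l by auto. apply conv_comm; auto.
Qed.

Lemma P_add m s G h1 h2 n : finsupp h1 -> finsupp h2 ->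
  P m s G (fun k => Cadd (h1 k) (h2 k)) n = Cadd (P m s G h1 n) (P m s G h2 n).
Proof.
  intros F1 F2. unfold P.
  rewrite (functional_extensionality (TK G (fun k => Cadd (h1 k) (h2 k)))
             (fun k => Cadd (TK G h1 k) (TK G h2 k))) by (intros; apply TK_add; auto).
  rewrite iterD_add. reflexivity.
Qed.

Lemma P_vanish_up m G h N : (forall d, d < 0 -> G d = C0) -> (forall j, N <= j -> h j = C0) ->
  forall n, N <= n -> P m 1 G h n = C0.
Proof.
  intros HG Hh. unfold P. induction m as [|m IH]; intros n Hn; simpl.
  - unfold TK. apply sumZ_zero. intros j.
    destruct (Z_lt_le_dec j n).
    + rewrite HG by lia. apply Cmul_0_l.
    + rewrite Hh by lia. apply Cmul_0_r.
  - unfold D. rewrite IH, IH by lia. apply Csub_00.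
Qed.

Lemma P_vanish_down m G h N : (forall d, 0 < d -> G d = C0) -> (forall j, j <= N -> h j = C0) ->
  forall n, n <= N -> P m (-1) G h n = C0.
Proof.
  intros HG Hh. unfold P. induction m as [|m IH]; intros n Hn; simpl.
  - unfold TK. apply sumZ_zero. intros j.
    destruct (Z_lt_le_dec n j).
    + rewrite HG by lia. apply Cmul_0_l.
    + rewrite Hh by lia. apply Cmul_0_r.
  - unfold D. rewrite IH, IH by lia. apply Csub_00.
Qed.

Definition Gp b d := if 0 <=? d then RtoC (kgam b (Z.to_nat d)) else C0.
Definition Gm b d := if d <=? 0 then RtoC (kgam b (Z.to_nat (- d))) else C0.

Lemma Wp_eq a h : Wp a h = P (mfl a) 1 (Gp (INR (mfl a) - a)%R) h.
Proof.
  unfold Wp, P.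
  replace (Wp_neg (INR (mfl a) - a)%R h) with (TK (Gp (INR (mfl a) - a)%R) h).
  reflexivity.
  apply functional_extensionality. intros n. unfold TK, Wp_neg. apply sumZ_ext. intros j.
  unfold Gp. destruct (Z.leb_spec n j), (Z.leb_spec 0 (j - n)); try lia; auto.
  apply Cmul_0_l.
Qed.

Lemma Wm_eq a h : Wm a h = P (mfl a) (-1) (Gm (INR (mfl a) - a)%R) h.
Proof.
  unfold Wm, P.
  replace (Wm_neg (INR (mfl a) - a)%R h) with (TK (Gm (INR (mfl a) - a)%R) h).
  reflexivity.
  apply functional_extensionality. intros n. unfold TK, Wm_neg. apply sumZ_ext. intros j.
  unfold Gm. destruct (Z.leb_spec j n), (Z.leb_spec (j - n) 0); try lia.
  - replace (- (j - n)) with (n - j) by lia. reflexivity.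
  - apply Cmul_0_l.
Qed.

Lemma Gp_neg b d : d < 0 -> Gp b d = C0.
Proof. intros H. unfold Gp. destruct (Z.leb_spec 0 d); [lia|reflexivity]. Qed.
Lemma Gm_pos b d : 0 < d -> Gm b d = C0.
Proof. intros H. unfold Gm. destruct (Z.leb_spec d 0); [lia|reflexivity]. Qed.

Lemma f_split f n : f n = Cadd (fplus f n) (fminus f n).
Proof. unfold fplus, fminus. destruct (0 <=? n); [rewrite Cadd_0_r | rewrite Cadd_0_l]; auto. Qed.

Lemma supp_fplus f a l : supp f a l -> supp (fplus f) a l.
Proof. intros H j Hj. unfold fplus. destruct (0 <=? j); auto. Qed.
Lemma supp_fminus f a l : supp f a l -> supp (fminus f) a l.
Proof. intros H j Hj. unfold fminus. destruct (0 <=? j); auto. Qed.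
Lemma finsupp_fplus f : finsupp f -> finsupp (fplus f).
Proof. intros F. destruct (finsupp_supp _ F) as (a & l & H). eapply supp_finsupp, supp_fplus; eauto. Qed.
Lemma finsupp_fminus f : finsupp f -> finsupp (fminus f).
Proof. intros F. destruct (finsupp_supp _ F) as (a & l & H). eapply supp_finsupp, supp_fminus; eauto. Qed.

Lemma conv_split f g n : finsupp g ->
  conv f g n = Cadd (Cadd (conv (fplus f) (fminus g) n) (conv (fplus f) (fplus g) n))
                    (Cadd (conv (fminus f) (fplus g) n) (conv (fminus f) (fminus g) n)).
Proof.
  intros Fg. destruct (finsupp_supp _ Fg) as (ba & lb & Hb).
  assert (Sp := supp_fplus _ _ _ Hb). assert (Sm := supp_fminus _ _ _ Hb).
  unfold conv.
  rewrite (sumZ_ext (fun j => Cmul (f (n - j)) (g j))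
     (fun j => Cadd (Cadd (Cmul (fplus f (n - j)) (fminus g j)) (Cmul (fplus f (n - j)) (fplus g j)))
                    (Cadd (Cmul (fminus f (n - j)) (fplus g j)) (Cmul (fminus f (n - j)) (fminus g j))))).
  2: { intros j. rewrite (f_split f (n - j)), (f_split g j). apply Cmul_expand4. }
  rewrite (sumZ_add_supp _ _ ba lb), (sumZ_add_supp _ _ ba lb), (sumZ_add_supp _ _ ba lb);
    try reflexivity;
    repeat (apply supp_add); first [apply (supp_mul_r (fun j => fplus f (n - j))) |
                                    apply (supp_mul_r (fun j => fminus f (n - j)))]; auto.
Qed.

Lemma conv_mm_vanish f g j : 0 <= j -> conv (fminus f) (fminus g) j = C0.
Proof.
  intros H. unfold conv. apply sumZ_zero. intros i. unfold fminus.
  destruct (Z.leb_spec 0 i). apply Cmul_0_r.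
  destruct (Z.leb_spec 0 (j - i)). apply Cmul_0_l. lia.
Qed.

Lemma conv_pp_vanish f g j : j <= -1 -> conv (fplus f) (fplus g) j = C0.
Proof.
  intros H. unfold conv. apply sumZ_zero. intros i. unfold fplus.
  destruct (Z.leb_spec 0 i); [|apply Cmul_0_r].
  destruct (Z.leb_spec 0 (j - i)). lia. apply Cmul_0_l.
Qed.

Close Scope Z_scope.

Theorem lemma2p10 (f g : Z -> Cplx) (alpha : R) :
  finsupp f -> finsupp g -> 0 < alpha ->
  (forall n : Z, (0 <= n)%Z ->
     W alpha (conv f g) n =
     Cadd (Cadd (conv (Wp alpha (fplus f)) (fminus g) n)
                (Wp alpha (conv (fplus f) (fplus g)) n))
          (conv (fminus f) (Wp alpha (fplus g)) n)) /\
  (forall n : Z, (n < 0)%Z ->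
     W alpha (conv f g) n =
     Cadd (Cadd (conv (Wm alpha (fminus f)) (fplus g) n)
                (Wm alpha (conv (fminus f) (fminus g)) n))
          (conv (fplus f) (Wm alpha (fminus g)) n)).
Proof.
  intros Ff Fg _.
  pose proof (finsupp_fplus _ Ff) as Ffp. pose proof (finsupp_fminus _ Ff) as Ffm.
  pose proof (finsupp_fplus _ Fg) as Fgp. pose proof (finsupp_fminus _ Fg) as Fgm.
  split.
  - intros n Hn. unfold W. rewrite (proj2 (Z.leb_le 0 n) Hn).
    rewrite !Wp_eq.
    rewrite (functional_extensionality (conv f g) _ (fun k => conv_split f g k Fg)).
    rewrite P_add by (apply finsupp_add; apply finsupp_conv; auto).
    rewrite P_add by (apply finsupp_conv; auto).
    rewrite P_add by (apply finsupp_conv; auto).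
    rewrite (P_conv_l _ _ _ (fplus f) (fminus g)) by auto.
    rewrite (P_conv_r _ _ _ (fminus f) (fplus g)) by auto.
    rewrite (P_vanish_up _ _ (conv (fminus f) (fminus g)) 0%Z) with (n := n); auto.
    + rewrite Cadd_0_r. reflexivity.
    + intros d Hd. apply Gp_neg; auto.
    + intros j Hj. apply conv_mm_vanish; auto.
  - intros n Hn. unfold W. rewrite (proj2 (Z.leb_gt 0 n) Hn).
    rewrite !Wm_eq.
    rewrite (functional_extensionality (conv f g) _
      (fun k => eq_trans (conv_split f g k Fg) (Cadd_comm _ _))).
    rewrite P_add by (apply finsupp_add; apply finsupp_conv; auto).
    rewrite P_add by (apply finsupp_conv; auto).
    rewrite P_add by (apply finsupp_conv; auto).
    rewrite (P_conv_l _ _ _ (fminus f) (fplus g)) by auto.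
    rewrite (P_conv_r _ _ _ (fplus f) (fminus g)) by auto.
    rewrite (P_vanish_down _ _ (conv (fplus f) (fplus g)) (-1)%Z) with (n := n); auto.
    + rewrite Cadd_0_r. reflexivity.
    + intros d Hd. apply Gm_pos; auto.
    + intros j Hj. apply conv_pp_vanish; auto.
    + lia.
Qed.
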